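(* Let $S$ be a caterpillar; then $S$ is upright. Moreover, let $P$ be a spine of $S$, and let $\mathcal B$ be a bias in $S$ such that $|D_S(X)|\ge 2$ for each $X\in\mathcal B$. Then there is a directing of $S$, forming a digraph $S'$, such that $D^+_{S'}(X)\ne\emptyset$ and $D^-_{S'}(X)\ne\emptyset$ for each $X\in\mathcal B$, and such that $P$ becomes a directed path of $S'$.
   Context: A path $P$ of a tree $S$ is a spine if every vertex of $S$ either belongs to $P$ or has a neighbour in $P$; a tree with a spine is a caterpillar. For a graph $G$ and $X\subseteq V(G)$, $D_G(X)$ is the set of edges with one end in $X$ and the other in $V(G)\setminus X$; for $A,B\subseteq V(G)$, $D_G(A,B)$ is the set of edges with one end in $A\setminus B$ and the other in $B\setminus A$. A bias in a graph $S$ is a set $\mathcal B$ of subsets of $V(S)$ such that: every $A\in\mathcal B$ satisfies $A\ne\emptyset, V(S)$; if $A,B\in\mathcal B$ and $D_S(A,B)=\emptyset$ then both $A\cap B$ and $A\cup B$ lie in $\mathcal B\cup\{\emptyset,V(S)\}$; and if $A,B\in\mathcal B$ and $|D_S(A,B)|=1$ then at least one of $A\cap B, A\cup B$ lies in $\mathcal B\cup\{\emptyset,V(S)\}$. A directing of $S$ assigns to each edge one of its ends as head, giving a digraph $S'$; $D^+_{S'}(X)$ is the set of edges with tail in $X$ and head outside $X$, and $D^-_{S'}(X)=D^+_{S'}(V(S)\setminus X)$. A forest $S$ is upright if for every bias $\mathcal B$ in $S$ with $|D_S(X)|\ge 2$ for all $X\in\mathcal B$, there is a directing of $S$, forming a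 digraph $S'$, such that $D^+_{S'}(X)\ne\emptyset$ and $D^-_{S'}(X)\neq\emptyset$ for all $X\in\mathcal B$. *)

(* Defs.v *)
(* A graph S is a finite simple graph: vertex type T : finType,
   adjacency e : rel T, symmetric and irreflexive. *)
From mathcomp Require Import all_boot.
Set Implicit Arguments. Unset Strict Implicit. Unset Printing Implicit Defensive.

Section Graphs.
Variables (T : finType) (e : rel T).

Definition simple_graph : Prop := symmetric e /\ irreflexive e.

(* no cycle: every duplicate-free closed e-walk has at most 2 vertices
   (a 2-vertex "cycle" [x; y] is just one edge traversed back and forth) *)
Definition forest : Prop := forall c : seq T, ucycle e c -> size c <= 2.

Definition connected : Prop := forall x y : T, connect e x y.

Definition tree : Prop := forest /\ connected.

Definition is_path (p : seq T) : Prop :=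
  p != [::] /\ uniq p /\ sorted e p.

Definition spine (p : seq T) : Prop :=
  is_path p /\ forall v : T, v \in p \/ exists2 u, u \in p & e v u.

Definition caterpillar : Prop := tree /\ exists p, spine p.

(* |D_S(X)| : each edge counted once, as the ordered pair (inside, outside) *)
Definition dcut (X : {set T}) : nat :=
  #|[set xy : T * T | (xy.1 \in X) && (xy.2 \notin X) && e xy.1 xy.2]|.

Definition dcut2 (A B : {set T}) : nat :=
  #|[set xy : T * T | (xy.1 \in A :\: B) && (xy.2 \in B :\: A) && e xy.1 xy.2]|.

Definition inBo (Bs : {set {set T}}) (Y : {set T}) : bool :=
  (Y \in Bs) || (Y == set0) || (Y == setT).

Definition bias (Bs : {set {set T}}) : Prop :=
  [/\ forall A, A \in Bs -> A != set0 /\ A != setT,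
      forall A B, A \in Bs -> B \in Bs -> dcut2 A B = 0 ->
        inBo Bs (A :&: B) /\ inBo Bs (A :|: B)
    & forall A B, A \in Bs -> B \in Bs -> dcut2 A B = 1 ->
        inBo Bs (A :&: B) \/ inBo Bs (A :|: B)].

(* a directing: d x y means the edge xy is directed with tail x and head y *)
Definition directing (d : rel T) : Prop :=
  (forall x y, d x y -> e x y) /\ (forall x y, e x y -> d x y = ~~ d y x).

Definition out_nonempty (d : rel T) (X : {set T}) : Prop :=
  exists x y, [/\ x \in X, y \notin X & d x y].

Definition in_nonempty (d : rel T) (X : {set T}) : Prop :=
  out_nonempty d (~: X).

Definition upright : Prop :=
  forest /\
  forall Bs : {set {set T}}, bias Bs -> (forall X, X \in Bs -> 2 <= dcut X) ->
    exists d, directing d /\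
      forall X, X \in Bs -> out_nonempty d X /\ in_nonempty d X.

End Graphs.

(* Main.v *)
Require Import Defs.
From mathcomp Require Import all_boot.
From Stdlib Require Import Classical.
From mathcomp Require Import zify.
Set Implicit Arguments. Unset Strict Implicit. Unset Printing Implicit Defensive.

Lemma path_take (U : eqType) (r : rel U) a s n : path r a s -> path r a (take n s).
Proof.
elim: s a n => [|b s IH] a [|n] //= /andP[-> H] /=. exact: IH.
Qed.

Lemma seg_ex (U : eqType) (r : rel U) (s : seq U) u v :
  uniq s -> sorted r s -> u \in s -> v \in s -> index u s < index v s ->
  exists q, [/\ path r u (rcons q v), uniq (u :: rcons q v), {subset q <= s}
          & size q = index v s - (index u s).+1].
Proof.
elim: s => [|a s IH] //= /andP[nas us] srt.
rewrite !inE.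
have srt' : sorted r s by move: srt; case: s {IH nas us} => //= b s /andP[].
case: (eqVneq u a) => [->|nua] /=.
  move=> _ /orP[/eqP->|vs]; first by rewrite eqxx.
  case: (eqVneq a v) => [vea|nva]; first by rewrite vea vs in nas.
  move=> _.
  have iv : index v s < size s by rewrite index_mem.
  have E : rcons (take (index v s) s) v = take (index v s).+1 s.
    by rewrite (take_nth a) // nth_index.
  exists (take (index v s) s); split.
  - rewrite E. exact: path_take.
  - rewrite /= E; apply/andP; split.
      apply: contra nas; exact: mem_take.
    exact: take_uniq.
  - by move=> z /mem_take zs; rewrite inE zs orbT.
  - by rewrite size_takel ?subn1 //; exact: ltnW.
move=> us' /orP[/eqP va|vs]; first by rewrite va eqxx.
case: (eqVneq a v) => [va|nva]; first by rewrite va vs in nas.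
rewrite ltnS => lt.
have [q [h1 h2 h3 h4]] := IH us srt' us' vs lt.
exists q; split=> //.
by move=> z /h3 zs; rewrite inE zs orbT.
Qed.

Section Cat.
Variables (T : finType) (e : rel T).
Hypotheses (esy : symmetric e) (eirr : irreflexive e) (forH : forest e).
Variable p : seq T.
Hypothesis spH : spine e p.

Lemma puniq : uniq p. Proof. by case: spH => [[_ []]]. Qed.
Lemma psorted : sorted e p. Proof. by case: spH => [[_ []]]. Qed.

Lemma cyc_small x c : path e x (rcons c x) -> uniq (x :: c) -> size c < 2.
Proof.
move=> H U; have := forH (c := x :: c); apply; by rewrite /ucycle /= H.
Qed.

Definition h (v : T) : T :=
  if v \in p then v else odflt v [pick u | (u \in p) && e v u].

Lemma h_p v : h v \in p.
Proof.
rewrite /h; case: ifP => // vp.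
case: spH => _ /(_ v) [|[u up evu]]; first by rewrite vp.
case: pickP => [w /andP[] //|/(_ u)]; by rewrite up evu.
Qed.

Lemma h_spine v : v \in p -> h v = v.
Proof. by rewrite /h => ->. Qed.

Lemma e_h v : v \notin p -> e v (h v).
Proof.
rewrite /h => vnp; rewrite (negbTE vnp).
case: spH => _ /(_ v) [vp|[u up evu]]; first by rewrite vp in vnp.
case: pickP => [w /andP[] //|/(_ u)]; by rewrite up evu.
Qed.

Lemma chord u v : u \in p -> v \in p -> e u v ->
  (index v p == (index u p).+1) || (index u p == (index v p).+1).
Proof.
wlog lt : u v / index u p < index v p.
  move=> W up vp euv.
  case: (ltngtP (index u p) (index v p)) => c.
  - exact: W.
  - by rewrite orbC; apply: W => //; rewrite esy.
  - by move: euv; rewrite (index_inj (head u p) up vp c) eirr.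
move=> up vp euv.
have [q [P1 U1 S1 Z1]] := seg_ex puniq psorted up vp lt.
case: q P1 U1 S1 Z1 => [|a q] P1 U1 S1 Z1.
  by apply/orP; left; apply/eqP; move: Z1 lt => /=; lia.
have : size (rcons (a :: q) v) < 2.
  apply: cyc_small U1. by rewrite rcons_path last_rcons esy euv andbT.
by rewrite size_rcons.
Qed.


Lemma seg_p u w : u \in p -> w \in p -> index u p < index w p ->
  exists q, [/\ path e u (rcons q w), uniq (u :: rcons q w) & {subset u :: rcons q w <= p}].
Proof.
move=> up wp lt; have [q [P1 U1 S1 _]] := seg_ex puniq psorted up wp lt.
exists q; split => // z; rewrite inE mem_rcons inE => /orP[/eqP->//|/orP[/eqP->//|/S1//]].
Qed.

Lemma two_nbrs v u w : v \notin p -> u \in p -> w \in p -> e v u -> e v w ->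
  index u p < index w p -> False.
Proof.
move=> vnp up wp evu evw lt.
have [q [P1 U1 S1]] := seg_p up wp lt.
have : size (u :: rcons q w) < 2.
  apply: (cyc_small (x := v)).
    by rewrite rcons_path /= evu P1 /= last_rcons esy evw.
  by rewrite /= -/(uniq (u :: rcons q w)) U1 andbT; apply: contra vnp => /S1.
by rewrite /= size_rcons.
Qed.

Lemma leaf_nbr v u : v \notin p -> u \in p -> e v u -> u = h v.
Proof.
move=> vnp up evu.
have hp := h_p v; have evh := e_h vnp.
case: (ltngtP (index u p) (index (h v) p)) => c.
- by case: (two_nbrs vnp up hp evu evh c).
- by case: (two_nbrs vnp hp up evh evu c).
- exact: (index_inj v up hp c).
Qed.

Lemma leaf_leaf v w : v \notin p -> w \notin p -> e v w -> False.
Proof.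
move=> vnp wnp evw.
have hv := h_p v; have hw := h_p w; have ev := e_h vnp; have ew := e_h wnp.
have vw : v != w by apply: contraTneq evw => ->; rewrite eirr.
case: (ltngtP (index (h v) p) (index (h w) p)) => c.
- have [q [P1 U1 S1]] := seg_p hv hw c.
  have : size (v :: h v :: rcons q (h w)) < 2.
    apply: (cyc_small (x := w)).
      by rewrite /= esy evw ev rcons_path /= P1 last_rcons esy ew.
    rewrite /= -/(uniq (h v :: rcons q (h w))) U1 andbT inE negb_or eq_sym vw /=.
    apply/andP; split; [apply: contra wnp => /S1 // | apply: contra vnp => /S1 //].
  by rewrite /= size_rcons.
- have [q [P1 U1 S1]] := seg_p hw hv c.
  have : size (w :: h w :: rcons q (h v)) < 2.
    apply: (cyc_small (x := v)).
      by rewrite /= evw ew rcons_path /= P1 last_rcons esy ev.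
    rewrite /= -/(uniq (h w :: rcons q (h v))) U1 andbT inE negb_or vw /=.
    apply/andP; split; [apply: contra vnp => /S1 // | apply: contra wnp => /S1 //].
  by rewrite /= size_rcons.
- have E : h v = h w by exact: (index_inj v hv hw c).
  have : size [:: w; h v] < 2.
    apply: (cyc_small (x := v)).
      by rewrite /= evw E ew esy -E ev.
    rewrite /= !inE negb_or vw /= andbT; apply/andP; split.
      by apply: contra vnp => /eqP ->.
    by apply: contra wnp => /eqP ->.
  by [].
Qed.

Definition ip v := index (h v) p.

Lemma h_h v : h (h v) = h v. Proof. exact: h_spine (h_p v). Qed.
Lemma ip_h v : ip (h v) = ip v. Proof. by rewrite /ip h_h. Qed.
Lemma ip_spine v : v \in p -> ip v = index v p. Proof. by move=> vp; rewrite /ip h_spine. Qed.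
Lemma ip_lt v : ip v < size p. Proof. by rewrite /ip index_mem h_p. Qed.

Lemma edge_cases u v : e u v ->
  [\/ [/\ u \in p, v \in p & (ip v == (ip u).+1) || (ip u == (ip v).+1)],
      u \notin p /\ v = h u
    | v \notin p /\ u = h v].
Proof.
move=> euv.
have [up|up] := boolP (u \in p); have [vp|vp] := boolP (v \in p).
- by apply: Or31; split => //; rewrite !ip_spine //; apply: chord.
- apply: Or33; split => //.
  by apply: leaf_nbr; rewrite // esy.
- apply: Or32; split => //.
  by apply: leaf_nbr.
- by case: (leaf_leaf up vp euv).
Qed.

Definition pref (Z : {set T}) m := forall v, v \in p -> (v \in Z) = (ip v < m).
Definition Lz (Z : {set T}) := [set l | (l \notin p) && (h l \in Z) && (l \notin Z)].
Definition Rz (Z : {set T}) := [set l | (l \notin p) && (h l \notin Z) && (l \in Z)].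

Lemma pref_h Z m v : pref Z m -> (h v \in Z) = (ip v < m).
Proof. by move=> H; rewrite H ?h_p // ip_h. Qed.

Lemma card_U2 (A B : {set T * T}) : #|A :|: B| <= #|A| + #|B|.
Proof. by rewrite cardsU leq_subr. Qed.

Variable x0 : T.

Lemma dcut_bound Z m : pref Z m ->
  dcut e Z <= ((0 < m) && (m < size p)) + #|Lz Z| + #|Rz Z|.
Proof.
move=> pZ.
set A : {set T * T} := if (0 < m) && (m < size p) then [set (nth x0 p m.-1, nth x0 p m)] else set0.
set B : {set T * T} := [set (l, h l) | l in Rz Z].
set C : {set T * T} := [set (h l, l) | l in Lz Z].
have sub : [set xy : T * T | (xy.1 \in Z) && (xy.2 \notin Z) && e xy.1 xy.2] \subset A :|: C :|: B.
  apply/subsetP => [[u v]]; rewrite inE /= => /andP[/andP[uZ vZ] euv].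
  case: (edge_cases euv) => [[up vp /orP[/eqP ipv|/eqP ipu]]|[unp vE]|[vnp uE]].
  - have := pZ u up; have := pZ v vp; rewrite uZ (negbTE vZ) => /esym/negbT; rewrite -leqNgt => mv /esym um.
    have mE : m = (ip u).+1 by apply/eqP; rewrite eqn_leq um -ipv mv.
    rewrite !inE; apply/orP; left; apply/orP; left.
    have p0 : 0 < ip v by rewrite ipv.
    rewrite /A mE -ipv ip_lt p0 /= inE.
    by rewrite ipv /= -ipv !ip_spine // !nth_index.
  - have := pZ v vp; have := pZ u up; rewrite uZ (negbTE vZ) ipu => /esym um /esym.
    by rewrite ltnW.
  - rewrite !inE; apply/orP; right; apply/imsetP; exists u; last by rewrite vE.
    by rewrite vE in vZ; rewrite inE unp /= uZ vZ.
  - rewrite !inE; apply/orP; left; apply/orP; right; apply/imsetP; exists v; last by rewrite uE.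
    by rewrite uE in uZ; rewrite inE vnp /= uZ vZ.
rewrite /dcut; apply: (leq_trans (subset_leq_card sub)).
apply: (leq_trans (card_U2 _ _)); apply: leq_add.
  apply: (leq_trans (card_U2 _ _)); apply: leq_add.
    by rewrite /A; case: ifP => _; rewrite ?cards1 ?cards0.
  exact: leq_imset_card.
exact: leq_imset_card.
Qed.

Definition sw (xy : T * T) := (xy.2, xy.1).
Lemma sw_inj : injective sw. Proof. by apply: (can_inj (g := sw)) => [[]]. Qed.

Lemma dcut_C Z : dcut e (~: Z) = dcut e Z.
Proof.
rewrite /dcut.
set S := [set xy : T * T | (xy.1 \in Z) && (xy.2 \notin Z) && e xy.1 xy.2].
have -> : [set xy : T * T | (xy.1 \in ~: Z) && (xy.2 \notin ~: Z) && e xy.1 xy.2] = sw @: S.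
  apply/setP => [[u v]].
  rewrite !inE /=; apply/idP/imsetP => [/andP[/andP[uZ vZ] euv]|[[a b]]].
    by exists (v, u) => //; rewrite inE /= (negbNE vZ) uZ esy.
  by rewrite inE /= => /andP[/andP[aZ bZ] eab] [-> ->]; rewrite bZ aZ esy.
exact: card_imset sw_inj.
Qed.

Lemma dcut2_sym A B : dcut2 e A B = dcut2 e B A.
Proof.
rewrite /dcut2.
set S := [set xy : T * T | (xy.1 \in B :\: A) && (xy.2 \in A :\: B) && e xy.1 xy.2].
have -> : [set xy : T * T | (xy.1 \in A :\: B) && (xy.2 \in B :\: A) && e xy.1 xy.2] = sw @: S.
  apply/setP => [[u v]].
  rewrite !inE /=; apply/idP/imsetP => [/andP[/andP[uZ vZ] euv]|[[a b]]].
    by exists (v, u) => //; rewrite /S !inE /= vZ -andbA uZ esy.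
  by rewrite /S !inE /= => /andP[/andP[aZ bZ] eab] [-> ->]; rewrite bZ aZ esy.
exact: card_imset sw_inj.
Qed.

Lemma dcut2_CC A B : dcut2 e (~: A) (~: B) = dcut2 e A B.
Proof.
rewrite dcut2_sym /dcut2; apply: eq_card => [[u v]].
by rewrite !inE !negbK /=; case: (u \in A); case: (u \in B); case: (v \in A); case: (v \in B).
Qed.

Definition S2 (A B : {set T}) :=
  [set xy : T * T | (xy.1 \in A :\: B) && (xy.2 \in B :\: A) && e xy.1 xy.2].

Lemma dcut2_same A B ma mb : pref A ma -> pref B mb -> ma <= mb ->
  S2 A B \subset [set (l, h l) | l in Rz A :&: Lz B].
Proof.
move=> pA pB le; apply/subsetP => [[u v]]; rewrite !inE /=.
move=> /andP[/andP[/andP[uB uA] /andP[vA vB]] euv].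
have spB w : w \in p -> w \in A -> w \in B.
  by move=> wp; rewrite pA // pB // => lt; exact: leq_trans lt le.
case: (edge_cases euv) => [[up _ _]|[unp vE]|[vnp uE]].
- by rewrite (spB u up uA) in uB.
- apply/imsetP; exists u; last by rewrite vE.
  by rewrite !inE unp -vE vA vB uA uB.
- by rewrite uE in uA uB; rewrite (spB _ (h_p v) uA) in uB.
Qed.

Lemma dcut2_mixed A B ma mb : pref A ma -> pref B mb -> ma != mb ->
  S2 A (~: B) \subset [set (l, h l) | l in Rz A :&: Rz B] :|: [set (h l, l) | l in Lz A :&: Lz B].
Proof.
move=> pA pB ne; apply/subsetP => [[u v]]; rewrite !inE /= !negbK.
move=> /andP[/andP[/andP[uB uA] /andP[vA vB]] euv].
case: (edge_cases euv) => [[up vp /orP[/eqP ipv|/eqP ipu]]|[unp vE]|[vnp uE]].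
- move: uA uB vA vB; rewrite (pA u up) (pB u up) (pA v vp) (pB v vp) -!leqNgt => a b c d.
  move: ne; rewrite ipv in c d; lia.
- move: uA uB vA vB; rewrite (pA u up) (pB u up) (pA v vp) (pB v vp) -!leqNgt => a b c d.
  move: ne; rewrite ipu in a b; lia.
- apply/orP; left; apply/imsetP; exists u; last by rewrite vE.
  by rewrite !inE unp -vE vA vB uA uB.
- apply/orP; right; apply/imsetP; exists v; last by rewrite uE.
  by rewrite !inE vnp -uE vA vB uA uB.
Qed.

Variable Bs : {set {set T}}.
Hypothesis bH : bias e Bs.
Hypothesis dH : forall X, X \in Bs -> 2 <= dcut e X.

Definition inZ (Z : {set T}) := (Z \in Bs) || (~: Z \in Bs).
Definition inZo (Z : {set T}) := [|| inZ Z, Z == set0 | Z == setT].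

Lemma inZ_dcut Z : inZ Z -> 2 <= dcut e Z.
Proof. by case/orP => [/dH //|/dH]; rewrite dcut_C. Qed.

Lemma inZ_C Z : inZ (~: Z) = inZ Z.
Proof. by rewrite /inZ setCK orbC. Qed.

Lemma inBo_inZo Y : inBo Bs Y -> inZo Y.
Proof. by rewrite /inBo /inZo /inZ => /orP[/orP[->|->]|->]; rewrite ?orbT. Qed.

Lemma inBo_inZoC Y : inBo Bs (~: Y) -> inZo Y.
Proof.
rewrite /inBo /inZo /inZ => /orP[/orP[->|]|]; rewrite ?orbT //.
- by rewrite -setCT => /eqP /setC_inj ->; rewrite eqxx !orbT.
- by rewrite -setC0 => /eqP /setC_inj ->; rewrite eqxx !orbT.
Qed.

Lemma same_fam A B : (A \in Bs) && (B \in Bs) || (~: A \in Bs) && (~: B \in Bs) ->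
  dcut2 e A B = 1 -> inZo (A :&: B) \/ inZo (A :|: B).
Proof.
case: bH => _ _ H1 /orP[/andP[aB bB]|/andP[aB bB]] d.
- by case: (H1 A B aB bB d) => /inBo_inZo; [left|right].
- have d' : dcut2 e (~: A) (~: B) = 1 by rewrite dcut2_CC.
  case: (H1 _ _ aB bB d'); rewrite -?setCU -?setCI => /inBo_inZoC; [right|left] => //.
Qed.

Lemma mixed_fam A B : (A \in Bs) && (~: B \in Bs) || (~: A \in Bs) && (B \in Bs) ->
  dcut2 e A (~: B) = 0 -> inZo (A :\: B).
Proof.
case: bH => _ H0 _ /orP[/andP[aB bB]|/andP[aB bB]] d.
- by case: (H0 A _ aB bB d); rewrite setDE => /inBo_inZo.
- have d' : dcut2 e (~: A) B = 0.
    rewrite dcut2_sym -d /dcut2; apply: eq_card => [[u v]].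
    by rewrite !inE !negbK /=; case: (u \in A); case: (u \in B); case: (v \in A); case: (v \in B).
  case: (H0 _ _ aB bB d') => _.
  have -> : ~: A :|: B = ~: (A :\: B) by rewrite setDE setCI setCK.
  exact: inBo_inZoC.
Qed.

Lemma pref_I A B ma mb : pref A ma -> pref B mb -> pref (A :&: B) (minn ma mb).
Proof. by move=> pA pB v vp; rewrite inE pA // pB // leq_min. Qed.

Lemma pref_U A B ma mb : pref A ma -> pref B mb -> pref (A :|: B) (maxn ma mb).
Proof. by move=> pA pB v vp; rewrite inE pA // pB // leq_max. Qed.

Lemma pref_none (Z : {set T}) : (forall v, v \in p -> v \notin Z) -> pref Z 0.
Proof. by move=> H v vp; rewrite (negbTE (H v vp)). Qed.

Lemma pref_all (Z : {set T}) : (forall v, v \in p -> v \in Z) -> pref Z (size p).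
Proof. by move=> H v vp; rewrite H // ip_lt. Qed.

Lemma LR_disj Z l : l \in Lz Z -> l \in Rz Z -> False.
Proof. by rewrite !inE => /andP[/andP[_ ->] _] /andP[/andP[]]. Qed.

Lemma W_ne Z m : inZ Z -> pref Z m -> exists l, (l \in Lz Z) || (l \in Rz Z).
Proof.
move=> iZ pZ; have := leq_trans (inZ_dcut iZ) (dcut_bound pZ).
case: (set_0Vmem (Lz Z)) => [->|[l lL]]; last by exists l; rewrite lL.
case: (set_0Vmem (Rz Z)) => [->|[l lR]]; last by exists l; rewrite lR orbT.
by rewrite !cards0 !addn0; case: (_ && _).
Qed.

Lemma W_two Z m x : inZ Z -> pref Z m -> (m == 0) || (size p <= m) ->
  (forall l, l \in Lz Z -> l = x) -> (forall l, l \in Rz Z -> l = x) -> False.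
Proof.
move=> iZ pZ mE HL HR; have := leq_trans (inZ_dcut iZ) (dcut_bound pZ).
have -> : (0 < m) && (m < size p) = false.
  by case/orP: mE => [/eqP->//|le]; rewrite [m < _]ltnNge le andbF.
have cL : #|Lz Z| <= 1 by apply/card_le1_eqP => a b /HL -> /HL ->.
have cR : #|Rz Z| <= 1 by apply/card_le1_eqP => a b /HR -> /HR ->.
case: (set_0Vmem (Lz Z)) => [->|[l lL]]; first by rewrite cards0 add0n; move: cR; case: #|_| => [|[]].
have -> : #|Rz Z| = 0.
  apply: eq_card0 => z; apply/negP => zR.
  by apply: (LR_disj (Z := Z) (l := x)); [rewrite -(HL l lL) | rewrite -(HR z zR)].
by rewrite addn0 add0n; move: cL; case: #|_| => [|[]].
Qed.

Definition key v := ip v * #|T| + enum_rank v.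

Lemma key_lt u v : ip u < ip v -> key u < key v.
Proof.
move=> lt; rewrite /key.
have ha : (enum_rank u : nat) < #|T| by exact: ltn_ord.
have hb : (enum_rank v : nat) < #|T| by exact: ltn_ord.
have : (ip u).+1 * #|T| <= ip v * #|T| by rewrite leq_mul2r lt orbT.
rewrite mulSn; lia.
Qed.

Lemma key_le u v : key u <= key v -> ip u <= ip v.
Proof. by move=> le; rewrite leqNgt; apply/negP => /key_lt; rewrite ltnNge le. Qed.

Lemma key_inj u v : key u = key v -> u = v.
Proof.
move=> E.
have Ei : ip u = ip v by apply/eqP; rewrite eqn_leq !key_le // E.
move: E; rewrite /key Ei => /addnI /val_inj; exact: enum_rank_inj.
Qed.

Definition bad (O Z : {set T}) :=
  (forall l, l \in Lz Z -> l \in O) /\ (forall l, l \in Rz Z -> l \notin O).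

Definition IA n O := forall Z m, inZ Z -> pref Z m ->
  (forall l, (l \in Lz Z) || (l \in Rz Z) -> key l < n) -> ~ bad O Z.

Lemma dcut2E A B : dcut2 e A B = #|S2 A B|. Proof. by []. Qed.

Lemma card_one (S : {set T * T}) z : S \subset [set z] -> z \in S -> #|S| = 1.
Proof.
move=> sub zS; apply/eqP; rewrite eqn_leq; apply/andP; split.
  by rewrite -(cards1 z); exact: subset_leq_card.
by apply/card_gt0P; exists z.
Qed.

Lemma card_zero (S : {set T * T}) : (forall z, z \in S -> False) -> #|S| = 0.
Proof. by move=> H; apply: eq_card0 => z; apply/negP => /H. Qed.

Lemma spine_sub A B ma mb v : pref A ma -> pref B mb -> ma <= mb ->
  v \in p -> v \in A -> v \in B.
Proof. by move=> pA pB le vp; rewrite pA // pB // => lt; exact: leq_trans lt le. Qed.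

Lemma LzE Z l : (l \in Lz Z) = [&& l \notin p, h l \in Z & l \notin Z].
Proof. by rewrite inE andbA. Qed.
Lemma RzE Z l : (l \in Rz Z) = [&& l \notin p, h l \notin Z & l \in Z].
Proof. by rewrite inE andbA. Qed.

Lemma LzC Z : Lz (~: Z) = Rz Z.
Proof. by apply/setP => l; rewrite LzE RzE !inE negbK. Qed.
Lemma RzC Z : Rz (~: Z) = Lz Z.
Proof. by apply/setP => l; rewrite LzE RzE !inE negbK. Qed.

Lemma LzI A B l : l \in Lz (A :&: B) ->
  l \in Lz A \/ [/\ l \in A, h l \in A & l \in Lz B].
Proof.
rewrite !LzE !inE negb_and => /and3P[-> /andP[hA hB] /orP[nA|nB]]; first by left; rewrite hA.
case: (boolP (l \in A)) => lA; [right; split => //; rewrite hB | left; rewrite hA] => //.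
Qed.

Lemma RzI A B l : l \in Rz (A :&: B) ->
  (l \in Rz A /\ l \in B) \/ [/\ h l \in A, l \in A & l \in Rz B].
Proof.
rewrite !RzE !inE negb_and => /and3P[-> /orP[nA|nB] /andP[lA lB]]; first by left; rewrite nA lA.
by case: (boolP (h l \in A)) => hA; [right; rewrite lA nB lB | left; rewrite lA lB].
Qed.

Lemma LzU A B l : l \in Lz (A :|: B) ->
  (l \in Lz A /\ l \notin B) \/ (l \in Lz B /\ l \notin A).
Proof.
rewrite !LzE !inE negb_or => /and3P[-> /orP[hA|hB] /andP[nA nB]].
  by left; rewrite hA nA nB.
by right; rewrite hB nA nB.
Qed.

Lemma RzU A B l : l \in Rz (A :|: B) ->
  (l \in Rz A /\ h l \notin B) \/ (l \in Rz B /\ h l \notin A).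
Proof.
rewrite !RzE !inE negb_or => /and3P[-> /andP[nA nB] /orP[lA|lB]].
  by left; rewrite nA lA nB.
by right; rewrite nB lB nA.
Qed.

Lemma fam_split A B : inZ A -> inZ B ->
  (A \in Bs) && (B \in Bs) || (~: A \in Bs) && (~: B \in Bs) \/
  (A \in Bs) && (~: B \in Bs) || (~: A \in Bs) && (B \in Bs).
Proof.
rewrite /inZ; case: (A \in Bs); case: (~: A \in Bs); case: (B \in Bs); case: (~: B \in Bs) => //=; auto.
Qed.

Lemma lt_of_ne n l x : key x = n -> key l <= n -> l != x -> key l < n.
Proof.
move=> kx le ne; rewrite ltn_neqAle le andbT; apply: contra ne => /eqP E.
by apply/eqP; apply: key_inj; rewrite E kx.
Qed.

Lemma base n O x Z1 m1 Z2 m2 :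
  IA n O -> x \notin p -> key x = n ->
  inZ Z1 -> pref Z1 m1 -> x \in Rz Z1 ->
  (forall l, (l \in Lz Z1) || (l \in Rz Z1) -> key l <= n) ->
  (forall l, l \in Lz Z1 -> l \in O) -> (forall l, l \in Rz Z1 -> l \notin O) ->
  inZ Z2 -> pref Z2 m2 -> x \in Lz Z2 ->
  (forall l, l \in Lz Z2 -> l = x) -> (forall l, l \notin Rz Z2) -> False.
Proof.
move=> IAH xnp kx iZ1 pZ1 xR1 k1 L1 R1 iZ2 pZ2 xL2 L2 R2.
have := xR1; rewrite RzE => /and3P[_ hxZ1 xZ1].
have := xL2; rewrite LzE => /and3P[_ hxZ2 xZ2].
have m1x : m1 <= ip x by move: hxZ1; rewrite (pref_h _ pZ1) -leqNgt.
have xm2 : ip x < m2 by rewrite -(pref_h _ pZ2).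
have le12 : m1 <= m2 by apply: leq_trans m1x (ltnW xm2).
have sp12 v : v \in p -> v \in Z1 -> v \in Z2 by exact: spine_sub pZ1 pZ2 le12.
have kip l : (l \in Lz Z1) || (l \in Rz Z1) -> ip l <= ip x.
  by move/k1; rewrite -kx => /key_le.
have R1Z2 l : l \in Rz Z1 -> h l \in Z2.
  by move=> lR; rewrite (pref_h _ pZ2); apply: leq_ltn_trans (kip l _) xm2; rewrite lR orbT.
have hsp l : h l \in Z1 -> h l \in Z2 by apply: sp12 (h_p l).
case: (fam_split iZ1 iZ2) => fam.
- have d1 : dcut2 e Z1 Z2 = 1.
    rewrite dcut2E; apply: (card_one (z := (x, h x))).
      apply: subset_trans (dcut2_same pZ1 pZ2 le12) _.
      apply/subsetP => z /imsetP[l]; rewrite inE => /andP[_ /L2 ->] ->; by rewrite inE.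
    by rewrite inE /= !inE xZ1 (negbTE xZ2) hxZ2 (negbTE hxZ1) e_h.
  case: (same_fam fam d1) => /or3P[iI|/eqP I0|/eqP IT].
  + apply: (IAH _ _ iI (pref_I pZ1 pZ2)).
      move=> l /orP[/LzI[lL|[_ hl /L2 lx]]|/RzI[[lR lZ2]|[_ _ lR2]]].
      * apply: lt_of_ne kx (k1 _ _) _; first by rewrite lL.
        by apply/negP => /eqP lx; move: lL; rewrite lx LzE xZ1 /= !andbF.
      * by rewrite lx in hl; rewrite hl in hxZ1.
      * apply: lt_of_ne kx (k1 _ _) _; first by rewrite lR orbT.
        by apply/negP => /eqP lx; move: lZ2; rewrite lx (negbTE xZ2).
      * by rewrite (negbTE (R2 l)) in lR2.
    split.
      move=> l /LzI[/L1 //|[_ hl /L2 lx]].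
      by rewrite lx in hl; rewrite hl in hxZ1.
    by move=> l /RzI[[/R1 //]|[_ _ lR2]]; rewrite (negbTE (R2 l)) in lR2.
  + apply: (@W_two Z1 0 x iZ1) => //.
    * apply: pref_none => v vp; apply/negP => vZ1.
      have : v \in Z1 :&: Z2 by rewrite inE vZ1 sp12.
      by rewrite I0 inE.
    * move=> l; rewrite LzE => /and3P[_ hl _].
      have : h l \in Z1 :&: Z2 by rewrite inE hl hsp.
      by rewrite I0 inE.
    * move=> l lR; apply: L2; rewrite LzE R1Z2 //.
      move: lR; rewrite RzE => /and3P[-> _ lZ1] /=.
      apply/negP => lZ2; have : l \in Z1 :&: Z2 by rewrite inE lZ1 lZ2.
      by rewrite I0 inE.
  + have : x \in Z1 :&: Z2 by rewrite IT inE.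
    by rewrite inE (negbTE xZ2) andbF.
  + case: (W_ne iI (pref_U pZ1 pZ2)) => l /orP[/LzU[[lL lZ2]|[/L2 lx lZ1]]|/RzU[[lR nh]|[lR2 _]]]; last by rewrite (negbTE (R2 l)) in lR2.
    * have := lL; rewrite LzE => /and3P[lp hl nl].
      have : l \in Lz Z2 by rewrite LzE lp hsp // lZ2.
      by move/L2 => lx; rewrite lx xZ1 in nl.
    * by rewrite lx xZ1 in lZ1.
    * by rewrite R1Z2 in nh.
  + have : h x \in Z1 :|: Z2 by rewrite inE hxZ2 orbT.
    by rewrite I0 inE.
  + apply: (@W_two Z2 (size p) x iZ2) => //.
    * apply: pref_all => v vp; have : v \in Z1 :|: Z2 by rewrite IT inE.
      by rewrite inE => /orP[/sp12 ->|].
    * by rewrite leqnn orbT.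
    * by move=> l; rewrite (negbTE (R2 l)).
- have d0 : dcut2 e Z1 (~: Z2) = 0.
    rewrite dcut2E; apply: card_zero => z /(subsetP (dcut2_mixed pZ1 pZ2 _)).
    rewrite neq_ltn (leq_ltn_trans m1x xm2) => /(_ isT).
    rewrite inE => /orP[/imsetP[l]|/imsetP[l]]; rewrite inE => /andP[].
      by rewrite (negbTE (R2 l)).
    by move=> lL /L2 lx; move: lL; rewrite lx LzE xZ1 /= !andbF.
  case/or3P: (mixed_fam fam d0) => [iY|/eqP Y0|/eqP YT].
  + apply: (@W_two (Z1 :\: Z2) 0 x iY) => //.
    * apply: pref_none => v vp; rewrite inE; apply/negP => /andP[nv vZ1].
      by rewrite sp12 in nv.
    * move=> l; rewrite LzE !inE => /and3P[_ /andP[nh hZ1] _].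
      by rewrite hsp in nh.
    * move=> l; rewrite RzE !inE negb_and negbK => /and3P[lp hl /andP[nlZ2 lZ1]].
      apply: L2; rewrite LzE lp nlZ2 andbT /=.
      case: (boolP (h l \in Z1)) => [/hsp //|nh]; apply: R1Z2.
      by rewrite RzE lp nh lZ1.
  + have : x \in Z1 :\: Z2 by rewrite inE xZ1 xZ2.
    by rewrite Y0 inE.
  + have : h x \in Z1 :\: Z2 by rewrite YT inE.
    by rewrite inE hxZ2.
Qed.

Lemma descent n O x y Zy my Z2 m2 :
  IA n O -> x \notin p -> key x = n ->
  inZ Z2 -> pref Z2 m2 -> x \in Lz Z2 ->
  (forall l, l \in Lz Z2 -> key l <= n) ->
  (forall l, l \notin Rz Z2) ->
  (forall l, l \in Lz Z2 -> (l == x) || (l \in O)) ->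
  y \in Lz Z2 -> y != x ->
  (forall z, z \in Lz Z2 -> z != x -> key y <= key z) ->
  inZ Zy -> pref Zy my -> y \in Rz Zy ->
  (forall l, (l \in Lz Zy) || (l \in Rz Zy) -> key l <= key y) ->
  (forall l, l \in Lz Zy -> l \in O) ->
  (forall l, l \in Rz Zy -> l \in O -> l = y) ->
  exists Z' m', [/\ inZ Z', pref Z' m', x \in Lz Z', (forall l, l \in Lz Z' -> l \in Lz Z2)
     & y \notin Lz Z'] /\ (forall l, l \notin Rz Z').
Proof.
move=> IAH xnp kx iZ2 pZ2 xL2 k2 R2 L2 yL2 yx ymin iZy pZy yRy ky Ly Ry.
have yO : y \in O by move: (L2 y yL2); rewrite (negbTE yx).
have kyn : key y < n := lt_of_ne kx (k2 y yL2) yx.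
have kyx : key y < key x by rewrite kx.
have ipyx : ip y <= ip x by apply: key_le; rewrite ltnW.
have xW l : (l \in Lz Zy) || (l \in Rz Zy) -> l != x.
  by move/ky => kl; apply/negP => /eqP lx; move: kl; rewrite lx leqNgt kyx.
have := yRy; rewrite RzE => /and3P[ynp hyZy yZy].
have := yL2; rewrite LzE => /and3P[_ hyZ2 yZ2].
have := xL2; rewrite LzE => /and3P[_ hxZ2 xZ2].
have my_y : my <= ip y by move: hyZy; rewrite (pref_h _ pZy) -leqNgt.
have y_m2 : ip y < m2 by rewrite -(pref_h _ pZ2).
have le : my <= m2 by apply: leq_trans my_y (ltnW y_m2).
have spy v : v \in p -> v \in Zy -> v \in Z2 by exact: spine_sub pZy pZ2 le.
have hspy l : h l \in Zy -> h l \in Z2 by apply: spy (h_p l).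
have xZy : x \notin Zy.
  apply/negP => xZ; have hx : h x \notin Zy.
    by rewrite (pref_h _ pZy) -leqNgt; apply: leq_trans my_y ipyx.
  have : x \in Rz Zy by rewrite RzE xnp hx xZ.
  by move=> xR; move: (xW x); rewrite xR orbT eqxx => /(_ isT).
have RyZ2 l : l \in Rz Zy -> h l \in Z2.
  move=> lR; rewrite (pref_h _ pZ2); apply: leq_ltn_trans _ y_m2.
  by apply: key_le; apply: ky; rewrite lR orbT.
case: (fam_split iZy iZ2) => fam.
- have d1 : dcut2 e Zy Z2 = 1.
    rewrite dcut2E; apply: (card_one (z := (y, h y))).
      apply: subset_trans (dcut2_same pZy pZ2 le) _.
      apply/subsetP => z /imsetP[l]; rewrite inE => /andP[lR lL] ->.
      have : (l == x) || (l \in O) := L2 l lL.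
      rewrite (negbTE (xW l _)) ?lR ?orbT //= => lO.
      by rewrite (Ry l lR lO) inE.
    by rewrite inE /= !inE yZy yZ2 hyZ2 hyZy e_h.
  case: (same_fam fam d1) => /or3P[iI|/eqP I0|/eqP IT].
  + exfalso; apply: (IAH _ _ iI (pref_I pZy pZ2)).
      move=> l /orP[/LzI[lL|[lZy _ lL2]]|/RzI[[lR lZ2]|[_ _ lR2]]].
      * by apply: leq_ltn_trans kyn; apply: ky; rewrite lL.
      * apply: lt_of_ne kx (k2 l lL2) _.
        by apply/negP => /eqP lx; rewrite -lx lZy in xZy.
      * by apply: leq_ltn_trans kyn; apply: ky; rewrite lR orbT.
      * by rewrite (negbTE (R2 l)) in lR2.
    split.
      move=> l /LzI[/Ly //|[lZy _ lL2]].
      move: (L2 l lL2) => /orP[/eqP lx|//].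
      by rewrite -lx lZy in xZy.
    move=> l /RzI[[lR lZ2]|[_ _ lR2]]; last by rewrite (negbTE (R2 l)) in lR2.
    by apply/negP => lO; move: lZ2; rewrite (Ry l lR lO) (negbTE yZ2).
  + exfalso; apply: (@W_two Zy 0 y iZy) => //.
    * apply: pref_none => v vp; apply/negP => vZ.
      have : v \in Zy :&: Z2 by rewrite inE vZ spy.
      by rewrite I0 inE.
    * move=> l; rewrite LzE => /and3P[_ hl _].
      have : h l \in Zy :&: Z2 by rewrite inE hl hspy.
      by rewrite I0 inE.
    * move=> l lR; have := lR; rewrite RzE => /and3P[lp hl lZ].
      have lZ2 : l \notin Z2.
        apply/negP => lZ2; have : l \in Zy :&: Z2 by rewrite inE lZ lZ2.
        by rewrite I0 inE.
      have : l \in Lz Z2 by rewrite LzE lp RyZ2.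
      move/L2 => /orP[/eqP lx|lO]; first by rewrite -lx lZ in xZy.
      exact: Ry.
  + exfalso; have : y \in Zy :&: Z2 by rewrite IT inE.
    by rewrite inE (negbTE yZ2) andbF.
  + exists (Zy :|: Z2), (maxn my m2); split; last first.
      move=> l; apply/negP => /RzU[[lR nh]|[lR2 _]].
        by rewrite RyZ2 in nh.
      by rewrite (negbTE (R2 l)) in lR2.
    split => //.
    * exact: pref_U.
    * by rewrite LzE xnp !inE hxZ2 orbT (negbTE xZy) (negbTE xZ2).
    * move=> l /LzU[[lL lZ2]|[//]].
      have := lL; rewrite !LzE => /and3P[-> hl _] /=.
      by rewrite hspy.
    * by rewrite LzE !inE yZy /= !andbF.
  + exfalso; have : h x \in Zy :|: Z2 by rewrite inE hxZ2 orbT.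
    by rewrite I0 inE.
  + exfalso; have : x \in Zy :|: Z2 by rewrite IT inE.
    by rewrite inE (negbTE xZy) (negbTE xZ2).
- exfalso.
  have d0 : dcut2 e Zy (~: Z2) = 0.
    rewrite dcut2E; apply: card_zero => z /(subsetP (dcut2_mixed pZy pZ2 _)).
    rewrite neq_ltn (leq_ltn_trans my_y y_m2) => /(_ isT).
    rewrite inE => /orP[/imsetP[l]|/imsetP[l]]; rewrite inE => /andP[].
      by move=> _; rewrite (negbTE (R2 l)).
    move=> lL lL2 _.
    have lx : l != x by apply: xW; rewrite lL.
    have kl : key l = key y.
      by apply/eqP; rewrite eqn_leq (ymin l lL2 lx) ky // lL.
    by move: lL; rewrite (key_inj kl) LzE yZy /= !andbF.
  case/or3P: (mixed_fam fam d0) => [iY|/eqP Y0|/eqP YT].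
  + have RY l : l \in Rz (Zy :\: Z2) -> l \in Lz Z2 /\ l != x.
      move=> lR; have := lR; rewrite RzE !inE negb_and negbK => /and3P[lp hl /andP[nlZ2 lZ]].
      split; last by apply/negP => /eqP lx; rewrite -lx lZ in xZy.
      rewrite lp nlZ2 andbT /=.
      case: (boolP (h l \in Zy)) => [/hspy //|nh]; apply: RyZ2.
      by rewrite RzE lp nh lZ.
    have LY l : l \in Lz (Zy :\: Z2) -> False.
      by move=> lL; have := lL; rewrite LzE !inE => /and3P[_ /andP[nh hZ] _]; rewrite hspy in nh.
    apply: (IAH (~: (Zy :\: Z2)) (size p)).
    * by rewrite inZ_C.
    * apply: pref_all => v vp; rewrite !inE negb_and negbK.
      by case: (boolP (v \in Zy)) => [/(spy v vp) -> //|_]; rewrite orbT.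
    * rewrite LzC RzC => l /orP[/RY[/k2 kl lx]|/LY //].
      exact: lt_of_ne kx kl lx.
    * rewrite /bad LzC RzC; split.
        move=> l /RY[/L2 /orP[/eqP -> |//]]; by rewrite eqxx.
      by move=> l /LY.
  + have : y \in Zy :\: Z2 by rewrite inE yZy yZ2.
    by rewrite Y0 inE.
  + have : h y \in Zy :\: Z2 by rewrite YT inE.
    by rewrite inE hyZ2.
Qed.

Definition IB (O : {set T}) := forall y, y \in O -> exists Z m,
  [/\ inZ Z, pref Z m, y \in Rz Z, (forall l, (l \in Lz Z) || (l \in Rz Z) -> key l <= key y)
    & (forall l, l \in Lz Z -> l \in O) /\ (forall l, l \in Rz Z -> l \in O -> l = y)].

Lemma core n O x Z1 m1 : IA n O -> IB O -> x \notin p -> key x = n ->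
  inZ Z1 -> pref Z1 m1 -> x \in Rz Z1 ->
  (forall l, (l \in Lz Z1) || (l \in Rz Z1) -> key l <= n) ->
  (forall l, l \in Lz Z1 -> l \in O) -> (forall l, l \in Rz Z1 -> l \notin O) ->
  forall Z2 m2, inZ Z2 -> pref Z2 m2 -> x \in Lz Z2 ->
  (forall l, (l \in Lz Z2) || (l \in Rz Z2) -> key l <= n) ->
  (forall l, l \in Lz Z2 -> (l == x) || (l \in O)) -> False.
Proof.
move=> IAH IBH xnp kx iZ1 pZ1 xR1 k1 L1 R1.
suff H : forall c Z2 m2, #|Lz Z2| <= c -> inZ Z2 -> pref Z2 m2 -> x \in Lz Z2 ->
  (forall l, (l \in Lz Z2) || (l \in Rz Z2) -> key l <= n) ->
  (forall l, l \in Lz Z2 -> (l == x) || (l \in O)) -> False.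
  by move=> Z2 m2; apply: (H #|Lz Z2|).
elim=> [|c IH] Z2 m2 cZ iZ2 pZ2 xL2 k2 L2.
  by move: cZ; rewrite leqn0 cards_eq0 => /eqP L0; rewrite L0 inE in xL2.
have xm2 : ip x < m2 by move: xL2; rewrite LzE (pref_h _ pZ2) => /and3P[].
have R2 l : l \notin Rz Z2.
  apply/negP => lR; have := lR; rewrite RzE (pref_h _ pZ2) -leqNgt => /and3P[_ ml _].
  have : key l <= key x by rewrite kx; apply: k2; rewrite lR orbT.
  by move/key_le => le; move: (leq_ltn_trans le xm2); rewrite ltnNge ml.
case: (boolP [exists y, (y \in Lz Z2) && (y != x)]) => [/existsP[y0 Py0]|].
- case: (@arg_minnP _ y0 (fun y => (y \in Lz Z2) && (y != x)) key Py0) => y /andP[yL yx] ymin.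
  have yO : y \in O by move: (L2 y yL); rewrite (negbTE yx).
  have [Zy [my [iZy pZy yRy ky [Ly Ry]]]] := IBH y yO.
  have [Z' [m' [[iZ' pZ' xL' sub yL'] R']]] :=
    descent (IAH) xnp kx iZ2 pZ2 xL2 (fun l lL => k2 l (introT orP (or_introl lL))) R2 L2 yL yx
      (fun z zL zx => ymin z (introT andP (conj zL zx))) iZy pZy yRy ky Ly Ry.
  apply: (IH Z' m') => //.
  + have : Lz Z' \subset Lz Z2 :\ y.
      apply/subsetP => l lL; rewrite inE sub // andbT.
      by rewrite inE; apply/negP => /eqP ly; rewrite -ly lL in yL'.
    move/subset_leq_card => le; apply: leq_trans le _.
    by move: cZ; rewrite (cardsD1 y (Lz Z2)) yL add1n ltnS.
  + by move=> l /orP[/sub lL|]; [apply: k2; rewrite lL | rewrite (negbTE (R' l))].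
  + by move=> l /sub; apply: L2.
- rewrite negb_exists => /forallP Hn.
  apply: (base IAH xnp kx iZ1 pZ1 xR1 k1 L1 R1 iZ2 pZ2 xL2 _ R2).
  move=> l lL; apply/eqP; move: (Hn l); rewrite lL /=; exact: negbNE.
Qed.

Definition Inv n O := [/\ IA n O, IB O & forall y, y \in O -> key y < n].

Lemma build n : exists O, Inv n O.
Proof.
elim: n => [|n [O [IAH IBH ICH]]].
  exists set0; split => //.
  - move=> Z m iZ pZ kZ _; case: (W_ne iZ pZ) => l /kZ.
    by rewrite ltn0.
  - by move=> y; rewrite inE.
  - by move=> y; rewrite inE.
case: (pickP (fun x => (x \notin p) && (key x == n))) => [x /andP[xnp /eqP kx]|none].
- pose P1 := exists Z1 m1, [/\ inZ Z1, pref Z1 m1, x \in Rz Z1,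
     (forall l, (l \in Lz Z1) || (l \in Rz Z1) -> key l <= n)
     & (forall l, l \in Lz Z1 -> l \in O) /\ (forall l, l \in Rz Z1 -> l \notin O)].
  have xnO : x \notin O by apply/negP => /ICH; rewrite kx ltnn.
  have ltn_x l : key l < n.+1 -> l != x -> key l < n.
    by move=> lt ne; apply: lt_of_ne kx _ ne; rewrite -ltnS.
  case: (classic P1) => [[Z1 [m1 [iZ1 pZ1 xR1 k1 [L1 R1]]]]|nP1].
  + exists (x |: O); split.
    * move=> Z m iZ pZ kZ [bL bR].
      case: (boolP (x \in Lz Z)) => xL.
        apply: (core IAH IBH xnp kx iZ1 pZ1 xR1 k1 L1 R1 iZ pZ xL).
          by move=> l /kZ; rewrite ltnS.
        by move=> l lL; move: (bL l lL); rewrite in_setU1.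
      case: (boolP (x \in Rz Z)) => xR.
        by move: (bR x xR); rewrite in_setU1 eqxx.
      apply: (IAH Z m iZ pZ).
        move=> l lW; apply: ltn_x; first exact: kZ.
        by apply/negP => /eqP lx; move: lW; rewrite lx (negbTE xL) (negbTE xR).
      split.
        move=> l lL; move: (bL l lL); rewrite in_setU1 => /orP[/eqP lx|//].
        by rewrite -lx lL in xL.
      by move=> l /bR; rewrite in_setU1 negb_or => /andP[].
    * move=> y; rewrite in_setU1 => /orP[/eqP ->|yO].
        exists Z1, m1; split => //; first by rewrite kx.
        split; first by move=> l /L1; rewrite in_setU1 orbC => ->.
        by move=> l lR; rewrite in_setU1 => /orP[/eqP //|lO]; move: (R1 l lR); rewrite lO.
      have [Zy [my [iZy pZy yR ky [Ly Ry]]]] := IBH y yO.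
      exists Zy, my; split => //; split; first by move=> l /Ly; rewrite in_setU1 orbC => ->.
      move=> l lR; rewrite in_setU1 => /orP[/eqP lx|]; last exact: Ry.
      have : key l <= key y by apply: ky; rewrite lR orbT.
      by rewrite lx kx leqNgt ICH.
    * move=> y; rewrite in_setU1 => /orP[/eqP ->|/ICH yn]; first by rewrite kx.
      exact: ltnW.
  + exists O; split => //.
    * move=> Z m iZ pZ kZ [bL bR].
      case: (boolP (x \in Lz Z)) => xL; first by move: (bL x xL); rewrite (negbTE xnO).
      case: (boolP (x \in Rz Z)) => xR.
        by apply: nP1; exists Z, m; split => //.
      apply: (IAH Z m iZ pZ); last by split.
      move=> l lW; apply: ltn_x; first exact: kZ.
      by apply/negP => /eqP lx; move: lW; rewrite lx (negbTE xL) (negbTE xR).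
    * by move=> y /ICH; apply: ltnW.
- exists O; split => //.
  + move=> Z m iZ pZ kZ; apply: (IAH Z m iZ pZ) => l lW.
    have lp : l \notin p by move: lW; rewrite LzE RzE => /orP[/and3P[]|/and3P[]].
    move: (kZ l lW) (none l); rewrite ltnS leq_eqVlt lp /= => /orP[->//|//].
  + by move=> y /ICH; apply: ltnW.
Qed.

Definition pos (O : {set T}) v :=
  if v \in p then (ip v).*2.+1 else if v \in O then (ip v).*2.+2 else (ip v).*2.
Definition dir (O : {set T}) : rel T := fun u v => e u v && (pos O u < pos O v).

Lemma pos_ne O u v : e u v -> pos O u != pos O v.
Proof.
have posp w : w \in p -> pos O w = (ip w).*2.+1 by rewrite /pos => ->.
have posl w : w \notin p -> odd (pos O w) = false.
  by rewrite /pos => /negbTE ->; case: (w \in O); rewrite /= ?odd_double.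
move=> /edge_cases [[up vp /orP[/eqP E|/eqP E]]|[unp ->]|[vnp ->]].
- by rewrite !posp // E -!addnn; apply/negP => /eqP; lia.
- by rewrite !posp // E -!addnn; apply/negP => /eqP; lia.
- apply/negP => /eqP E; have := posl u unp; rewrite E posp ?h_p //=.
  by rewrite odd_double.
- apply/negP => /eqP E; have := posl v vnp; rewrite -E posp ?h_p //=.
  by rewrite odd_double.
Qed.

Lemma dir_directing O : directing e (dir O).
Proof.
split; first by move=> u v /andP[].
move=> u v euv; rewrite /dir euv esy euv /=.
by have := pos_ne O euv; case: (ltngtP (pos O u) (pos O v)) => //; rewrite eqxx.
Qed.

Lemma dir_sorted O : sorted (dir O) p.
Proof.
apply/(sortedP x0) => i lt; rewrite /dir.
move/(sortedP x0): psorted => /(_ i lt) ->.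
have mi : nth x0 p i \in p by apply: mem_nth; exact: ltnW.
have mi1 : nth x0 p i.+1 \in p by apply: mem_nth.
rewrite /pos mi mi1 !ip_spine // !index_uniq ?puniq //; last exact: ltnW.
by rewrite -!addnn; lia.
Qed.

Lemma good_in O Z : ~ bad O Z -> exists u v, [/\ u \notin Z, v \in Z & dir O u v].
Proof.
move=> nb.
case: (classic (exists l, l \in Lz Z /\ l \notin O)) => [[l [lL lO]]|nL].
  have := lL; rewrite LzE => /and3P[lp hl nl].
  exists l, (h l); split => //; rewrite /dir e_h //= /pos h_p (negbTE lp) (negbTE lO) ip_h.
  by rewrite ltnS.
case: (classic (exists l, l \in Rz Z /\ l \in O)) => [[l [lR lO]]|nR].
  have := lR; rewrite RzE => /and3P[lp hl lZ].
  exists (h l), l; split => //; rewrite /dir esy e_h //= /pos h_p (negbTE lp) lO ip_h.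
  by rewrite ltnS.
exfalso; apply: nb; split.
  move=> l lL; apply/negPn/negP => lO; apply: nL; exists l; split => //.
move=> l lR; apply/negP => lO; apply: nR; exists l; split => //.
Qed.

Lemma no_in_pref (X : {set T}) :
  (forall i, i.+1 < size p -> nth x0 p i \notin X -> nth x0 p i.+1 \notin X) ->
  pref X (find (fun v => v \notin X) p).
Proof.
move=> H v vp; rewrite ip_spine //.
set m := find _ p; set i := index v p.
have iv : nth x0 p i = v by rewrite nth_index.
case: (ltnP i m) => [lt|le].
  by rewrite -iv; move: (before_find x0 lt) => /negbFE ->.
have ip : i < size p by rewrite index_mem.
have hasX : has (fun v => v \notin X) p by rewrite has_find; apply: leq_ltn_trans le ip.
have nm : nth x0 p m \notin X := nth_find x0 hasX.
rewrite -iv; apply/negbTE.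
have : forall j, j <= i - m -> nth x0 p (m + j) \notin X.
  elim=> [|j IH] lej; first by rewrite addn0.
  rewrite addnS; apply: H; first by move: lej ip; lia.
  apply: IH; exact: ltnW.
by move/(_ (i - m) (leqnn _)); rewrite subnKC.
Qed.

Lemma dir_step O i : i.+1 < size p -> dir O (nth x0 p i) (nth x0 p i.+1).
Proof. by move=> lt; move/(sortedP x0): (dir_sorted O) => /(_ i lt). Qed.

Lemma main_sec : exists d, [/\ directing e d,
  (forall X, X \in Bs -> out_nonempty d X /\ in_nonempty d X) & sorted d p].
Proof.
have [O [IAH _ _]] := build (size p * #|T|).
have keyb l : key l < size p * #|T|.
  rewrite /key; have hr : (enum_rank l : nat) < #|T| by exact: ltn_ord.
  have : (ip l).+1 * #|T| <= size p * #|T| by rewrite leq_mul2r ip_lt orbT.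
  rewrite mulSn; lia.
have allgood Z m : inZ Z -> pref Z m -> ~ bad O Z.
  by move=> iZ pZ; apply: (IAH Z m iZ pZ) => l _; exact: keyb.
exists (dir O); split; [exact: dir_directing | | exact: dir_sorted].
move=> X XB; split.
- case: (classic (exists i, [/\ i.+1 < size p, nth x0 p i \in X & nth x0 p i.+1 \notin X])).
    by move=> [i [lt a b]]; exists (nth x0 p i), (nth x0 p i.+1); split => //; exact: dir_step.
  move=> nE.
  have pC : pref (~: X) (find (fun v => v \notin ~: X) p).
    apply: no_in_pref => i lt; rewrite !inE !negbK => a.
    case: (boolP (nth x0 p i.+1 \in X)) => // b; exfalso.
    by apply: nE; exists i; split.
  have iC : inZ (~: X) by rewrite /inZ setCK XB orbT.
  have [u [v [uX vX d]]] := good_in (allgood _ _ iC pC).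
  exists u, v; split => //; first by rewrite inE negbK in uX.
  by rewrite inE in vX.
- case: (classic (exists i, [/\ i.+1 < size p, nth x0 p i \notin X & nth x0 p i.+1 \in X])).
    by move=> [i [lt a b]]; exists (nth x0 p i), (nth x0 p i.+1); split; rewrite ?inE ?negbK //; exact: dir_step.
  move=> nE.
  have pX : pref X (find (fun v => v \notin X) p).
    apply: no_in_pref => i lt a.
    case: (boolP (nth x0 p i.+1 \in X)) => // b; exfalso.
    by apply: nE; exists i; split.
  have iX : inZ X by rewrite /inZ XB.
  have [u [v [uX vX d]]] := good_in (allgood _ _ iX pX).
  by exists u, v; split => //; rewrite inE ?negbK.
Qed.
End Cat.

Theorem mainTheorem4 (T : finType) (e : rel T) :
  simple_graph e -> caterpillar e ->
  upright e /\
  (forall p : seq T, spine e p ->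
   forall Bs : {set {set T}}, bias e Bs ->
   (forall X, X \in Bs -> 2 <= dcut e X) ->
   exists d : rel T,
     [/\ directing e d,
         (forall X, X \in Bs -> out_nonempty d X /\ in_nonempty d X)
       & sorted d p \/ sorted d (rev p)]).
Proof.
move=> [esy eirr] [[forH _] [p0 sp0]].
have gen : forall p : seq T, spine e p ->
   forall Bs : {set {set T}}, bias e Bs ->
   (forall X, X \in Bs -> 2 <= dcut e X) ->
   exists d : rel T,
     [/\ directing e d,
         (forall X, X \in Bs -> out_nonempty d X /\ in_nonempty d X)
       & sorted d p \/ sorted d (rev p)].
  move=> p spH Bs bH dH.
  have x0 : T.
    by case: spH => [[nz _] _]; move: nz; case: p => // x _.
  have [d [D1 D2 D3]] := main_sec esy eirr forH spH x0 bH dH.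
  by exists d; split => //; left.
split; last exact: gen.
split => // Bs bH dH.
have [d [D1 D2 _]] := gen p0 sp0 Bs bH dH.
by exists d.
Qed.
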